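(* Let $M\subset\mathbb{R}^{m+1}$ be an entire graphical translating soliton, i.e. the graph of a smooth function $u:\mathbb{R}^m\to\mathbb{R}$ which is a translating soliton with velocity $\operatorname{e}_{m+1}$. Suppose there are constants $C>0$, $r>0$ and $\alpha$ such that $|u(x)|\le C|x|^\alpha$ for all $x\in\mathbb{R}^m$ with $|x|\ge r$. Then $\alpha\ge2$.
   Context: A translating soliton is an oriented hypersurface whose scalar mean curvature satisfies $H=-\langle\operatorname{e}_{m+1},\xi\rangle$ ($\xi$ the unit normal), equivalently its mean curvature vector equals the normal projection of $\operatorname{e}_{m+1}$. *)

(* Defs.v *)
From Stdlib Require Import Reals.
From mathcomp Require Import all_boot.
Set Implicit Arguments. Unset Strict Implicit.

Open Scope R_scope.

Definition rsum (m : nat) (f : 'I_m -> R) : R :=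
  foldr (fun i acc => f i + acc) 0 (enum 'I_m).

Definition vec (m : nat) := 'I_m -> R.

Definition vnorm {m : nat} (x : vec m) : R :=
  sqrt (rsum (fun i : 'I_m => x i * x i)).

Definition shift {m : nat} (x : vec m) (i : 'I_m) (t : R) : vec m :=
  fun j => if j == i then x j + t else x j.

Definition has_partial {m : nat} (f : vec m -> R) (i : 'I_m) (x : vec m) (l : R) : Prop :=
  derivable_pt_lim (fun t => f (shift x i t)) 0 l.

Definition vcont {m : nat} (f : vec m -> R) : Prop :=
  forall x eps, 0 < eps -> exists d, 0 < d /\
    forall y : vec m, vnorm (fun j => y j - x j) < d -> Rabs (f y - f x) < eps.

Fixpoint Ck {m : nat} (k : nat) (f : vec m -> R) : Prop :=
  match k with
  | O => vcont f
  | S k' => vcont f /\ forall i : 'I_m, exists g : vec m -> R,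
              (forall x, has_partial f i x (g x)) /\ Ck k' g
  end.

Definition smooth {m : nat} (f : vec m -> R) : Prop := forall k, Ck k f.

(* Graph of u is a translating soliton with velocity e_{m+1}, i.e.
   div(Du / sqrt(1+|Du|^2)) = 1 / sqrt(1+|Du|^2), written in the equivalent
   non-divergence form  sum_{i,j} (delta_ij - u_i u_j/(1+|Du|^2)) u_ij = 1,
   where Du i, D2u i j are the first and second partial derivatives. *)
Definition translator_eq {m : nat} (Du : 'I_m -> vec m -> R)
  (D2u : 'I_m -> 'I_m -> vec m -> R) (x : vec m) : Prop :=
  rsum (fun i : 'I_m => rsum (fun j : 'I_m =>
     ((if i == j then 1 else 0)
       - Du i x * Du j x / (1 + rsum (fun k : 'I_m => Du k x * Du k x)))
     * D2u i j x)) = 1.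

(* Main.v *)
Require Import Defs.
From Stdlib Require Import Reals Lra FunctionalExtensionality Classical.
From mathcomp Require Import all_boot.
From mathcomp Require all_order all_algebra all_classical all_reals all_analysis Rstruct Rstruct_topology.
Open Scope R_scope.

Definition rs {I : Type} (s : seq I) (f : I -> R) : R :=
  foldr (fun i acc => f i + acc) 0 s.

Lemma rsumE m (f : 'I_m -> R) : rsum f = rs (enum 'I_m) f.
Proof. reflexivity. Qed.

Section RS.
Context {I : Type}.
Implicit Types (s : seq I) (f g : I -> R).

Lemma rs_ext s f g : (forall i, f i = g i) -> rs s f = rs s g.
Proof. move=> H; elim: s => //= a s ->; by rewrite H. Qed.



Lemma rs_add s f g : rs s (fun i => f i + g i) = rs s f + rs s g.
Proof. elim: s => /= [|a s ->]; lra. Qed.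

Lemma rs_scal s c f : rs s (fun i => c * f i) = c * rs s f.
Proof. elim: s => /= [|a s ->]; ring. Qed.

Lemma rs_le s f g : (forall i, f i <= g i) -> rs s f <= rs s g.
Proof. move=> H; elim: s => /= [|a s IH]; [lra|]. have := H a; lra. Qed.

Lemma rs_nonneg s f : (forall i, 0 <= f i) -> 0 <= rs s f.
Proof. move=> H; elim: s => /= [|a s IH]; [lra|]. have := H a; lra. Qed.

Lemma rs_const s c : rs s (fun _ => c) = INR (size s) * c.
Proof. elim: s => /= [|a s ->]; [ring|]. by case: (size s) => [|n] /=; ring. Qed.



Lemma rs_abs s f : Rabs (rs s f) <= rs s (fun i => Rabs (f i)).
Proof.
elim: s => /= [|a s IH]; first by rewrite Rabs_R0; lra.
eapply Rle_trans; [apply Rabs_triang|lra].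
Qed.



End RS.

Section RSeq.
Context {I : eqType}.
Implicit Types (s : seq I) (f g : I -> R).
Lemma rs_ext_in s f g : (forall i, i \in s -> f i = g i) -> rs s f = rs s g.
Proof.
elim: s => //= a s IH H; rewrite H ?mem_head // IH // => i Hi.
by apply: H; rewrite in_cons Hi orbT.
Qed.
Lemma rs_term s f i : (forall j, 0 <= f j) -> i \in s -> f i <= rs s f.
Proof.
move=> H; elim: s => //= a s IH; rewrite in_cons => /orP [/eqP ->|Hi].
  have := rs_nonneg s f H; lra.
have := IH Hi; have := H a; lra.
Qed.
Lemma rs_delta s i f : uniq s -> i \in s ->
  rs s (fun k => (if k == i then 1 else 0) * f k) = f i.
Proof.
elim: s => //= a s IH /andP [Ha Hu]; rewrite in_cons => /orP [/eqP Hi|Hi].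
  subst a; rewrite eqxx.
  rewrite (@rs_ext_in s _ (fun _ => 0)); first by rewrite rs_const; ring.
  move=> k Hk; case: (k =P i) => [Hki|]; last by move=> _; ring.
  by subst k; rewrite Hk in Ha.
rewrite IH //; case: (a =P i) => [Hai|]; last by move=> _; ring.
by subst a; rewrite Hi in Ha.
Qed.
End RSeq.



Lemma rs_swap {I J : Type} (s : seq I) (t : seq J) (F : I -> J -> R) :
  rs s (fun i => rs t (fun j => F i j)) = rs t (fun j => rs s (fun i => F i j)).
Proof.
elim: s => /= [|a s ->].
  by rewrite (@rs_const _ t 0); ring.
by rewrite -rs_add.
Qed.

Lemma coord_le_vnorm m (a : vec m) j : Rabs (a j) <= vnorm a.
Proof.
rewrite /vnorm -sqrt_Rsqr_abs; apply: sqrt_le_1_alt.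
rewrite /Rsqr rsumE; apply: (@rs_term _ _ (fun k => a k * a k)).
  by move=> k; nra.
by rewrite mem_enum.
Qed.

Lemma vnorm_small (m : nat) (d : R) : 0 < d -> exists eta, 0 < eta /\
   forall a : vec m, (forall j, Rabs (a j) < eta) -> vnorm a < d.
Proof.
move=> d0; have m0 := pos_INR m.
exists (d / (INR m + 1)); split; first by apply: Rdiv_lt_0_compat; lra.
set eta := d / (INR m + 1).
have Heta : eta * (INR m + 1) = d by rewrite /eta; field; lra.
have eta0 : 0 < eta by apply: Rdiv_lt_0_compat; lra.
move=> a Ha; rewrite /vnorm rsumE -(sqrt_square d); last lra.
apply: sqrt_lt_1_alt; split; first by apply: rs_nonneg => k; nra.
apply: (Rle_lt_trans _ (rs (enum 'I_m) (fun _ => eta * eta))).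
  apply: rs_le => k; have := Ha k; have := Rabs_pos (a k).
  have E : a k * a k = Rabs (a k) * Rabs (a k).
    by rewrite -Rabs_mult Rabs_pos_eq //; nra.
  rewrite E; nra.
rewrite rs_const size_enum_ord; nra.
Qed.


Lemma dpl_ext f g x l : (forall t, f t = g t) ->
  derivable_pt_lim f x l -> derivable_pt_lim g x l.
Proof.
move=> H D eps e0; have [del Hd] := D eps e0; exists del => h h0 hd.
rewrite -!H; exact: Hd.
Qed.

Arguments dpl_ext {f g x l}.

Lemma dpl_shift F s l : derivable_pt_lim (fun t => F (s + t)) 0 l ->
  derivable_pt_lim F s l.
Proof.
move=> D eps e0; have [del Hd] := D eps e0; exists del => h h0 hd.
by have := Hd h h0 hd; rewrite Rplus_0_l Rplus_0_r.
Qed.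

Lemma dpl_unshift F s l : derivable_pt_lim F s l ->
  derivable_pt_lim (fun t => F (s + t)) 0 l.
Proof.
move=> D eps e0; have [del Hd] := D eps e0; exists del => h h0 hd.
by rewrite Rplus_0_l Rplus_0_r; apply: Hd.
Qed.

Lemma MVT_any F F' a b : (forall s, derivable_pt_lim F s (F' s)) ->
  exists c, F b - F a = F' c * (b - a) /\ Rabs (c - a) <= Rabs (b - a).
Proof.
move=> HF; case: (Rtotal_order a b) => [ab|[ab|ab]].
- have [c [Hc Hc']] := MVT_cor2 F F' _ _ ab (fun c _ => HF c).
  exists c; split => //; rewrite !Rabs_pos_eq; lra.
- subst; exists b; split; first ring.
  by apply: Req_le.
- have [c [Hc Hc']] := MVT_cor2 F F' _ _ ab (fun c _ => HF c).
  exists c; split; first lra.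
  rewrite !Rabs_left; lra.
Qed.

Arguments MVT_any {F F' a b}.

Definition padd {m} (x : vec m) (h : R) (p : vec m) (l : seq 'I_m) : vec m :=
  fun j => if j \in l then x j + h * p j else x j.

Lemma shift_shift m (y : vec m) i s t : shift (shift y i s) i t = shift y i (s + t).
Proof. apply: functional_extensionality => j; rewrite /shift; case: (j == i) => //; ring. Qed.

Lemma shift0 m (y : vec m) i : shift y i 0 = y.
Proof. apply: functional_extensionality => j; rewrite /shift; case: (j == i) => //; ring. Qed.

Section Chain.
Variables (m : nat) (f : vec m -> R) (g : 'I_m -> vec m -> R).
Hypothesis Hg : forall i y, has_partial f i y (g i y).
Hypothesis Hgc : forall i, vcont (g i).

Lemma partial_at y i s :
  derivable_pt_lim (fun t => f (shift y i t)) s (g i (shift y i s)).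
Proof.
apply: dpl_shift; apply: (dpl_ext _ (Hg i (shift y i s))) => t /=.
by rewrite shift_shift.
Qed.

Lemma Dterm x p (l : seq 'I_m) i : i \notin l ->
  derivable_pt_lim (fun h => f (shift (padd x h p l) i (h * p i)) - f (padd x h p l))
    0 (p i * g i x).
Proof.
move=> Hi eps e0.
set B := rs (enum 'I_m) (fun j => Rabs (p j)).
have HB : forall j, Rabs (p j) <= B.
  move=> j; apply: (@rs_term _ _ (fun j => Rabs (p j))); last by rewrite mem_enum.
  by move=> k; apply: Rabs_pos.
have B0 : 0 <= B by apply: Rle_trans (HB i); apply: Rabs_pos.
have pi0 := Rabs_pos (p i).
set eps' := eps / (Rabs (p i) + 1).
have eps'0 : 0 < eps' by apply: Rdiv_lt_0_compat; lra.
have Heps' : Rabs (p i) * eps' < eps.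
  rewrite /eps'; apply: (Rmult_lt_reg_r (Rabs (p i) + 1)); first lra.
  field_simplify; lra.
have [d1 [d10 Hd1]] := Hgc i x eps' eps'0.
have [eta [eta0 Heta]] := @vnorm_small m d1 d10.
have del0 : 0 < eta / (B + 1) by apply: Rdiv_lt_0_compat; lra.
exists (mkposreal _ del0) => h h0 /= hd.
set y := padd x h p l.
have [c [Hc Hc']] := MVT_any (a := 0) (b := h * p i) (partial_at y i).
rewrite !Rmult_0_l shift0 Rplus_0_l Rminus_diag Rminus_0_r.
rewrite shift0 Rminus_0_r in Hc. rewrite !Rminus_0_r in Hc'.
rewrite Hc.
set z := shift y i c.
have Hz : forall j, Rabs (z j - x j) < eta.
  move=> j; apply: (Rle_lt_trans _ (Rabs h * B)).
    rewrite /z /y /shift /padd; case: (j =P i) => [Hji|Hji].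
      subst j; rewrite (negbTE Hi) Rplus_comm /Rminus Rplus_assoc Rplus_opp_r Rplus_0_r.
      by apply: (Rle_trans _ _ _ Hc'); rewrite Rabs_mult; apply: Rmult_le_compat_l;
        [apply: Rabs_pos|apply: HB].
    case: (j \in l).
      rewrite Rplus_comm /Rminus Rplus_assoc Rplus_opp_r Rplus_0_r Rabs_mult.
      by apply: Rmult_le_compat_l; [apply: Rabs_pos|apply: HB].
    rewrite Rminus_diag Rabs_R0; apply: Rmult_le_pos; [apply: Rabs_pos|lra].
  have hB : Rabs h * (B + 1) < eta.
    apply: (Rmult_lt_reg_r (/ (B + 1))); first by apply: Rinv_0_lt_compat; lra.
    rewrite Rmult_assoc Rinv_r; last lra. rewrite Rmult_1_r; exact: hd.
  have := Rabs_pos h; nra.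
have Hg' := Hd1 z (Heta _ Hz).
have -> : g i z * (h * p i) / h - p i * g i x = p i * (g i z - g i x).
  by field.
rewrite Rabs_mult; apply: Rle_lt_trans Heps'.
apply: Rmult_le_compat_l; [exact: pi0|lra].
Qed.
Lemma chain_l x p (l : seq 'I_m) : uniq l ->
  derivable_pt_lim (fun h => f (padd x h p l)) 0 (rs l (fun i => p i * g i x)).
Proof.
elim: l => [|i l IH] /=.
  move=> _; apply: (dpl_ext _ (derivable_pt_lim_const (f x) 0)) => t.
  by congr f; apply: functional_extensionality => j; rewrite /padd in_nil.
move=> /andP [Hi Hu].
have E : forall h, padd x h p (i :: l) = shift (padd x h p l) i (h * p i).
  move=> h; apply: functional_extensionality => j.
  rewrite /padd /shift in_cons; case: (j =P i) => [->|] /=.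
    by rewrite (negbTE Hi).
  by [].
apply: (dpl_ext _ (derivable_pt_lim_plus _ _ _ _ _ (Dterm x p _ _ Hi) (IH Hu))) => t.
rewrite /plus_fct E; ring.
Qed.

Lemma chain x p t0 :
  derivable_pt_lim (fun t => f (fun j => x j + t * p j)) t0
    (rs (enum 'I_m) (fun i => p i * g i (fun j => x j + t0 * p j))).
Proof.
apply: dpl_shift.
apply: (dpl_ext _ (chain_l (fun j => x j + t0 * p j) p _ (enum_uniq _))) => t.
congr f; apply: functional_extensionality => j; rewrite /padd mem_enum inE. ring. Qed.
End Chain.


Lemma dpl_eq f x l l' : derivable_pt_lim f x l -> l = l' -> derivable_pt_lim f x l'.
Proof. by move=> H <-. Qed.

Lemma rs_deriv {I : Type} (s : seq I) (F : I -> R -> R) (F' : I -> R) t :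
  (forall i, derivable_pt_lim (F i) t (F' i)) ->
  derivable_pt_lim (fun t => rs s (fun i => F i t)) t (rs s F').
Proof.
move=> H; elim: s => [|a s IH] /=.
  exact: derivable_pt_lim_const.
exact: (dpl_ext (fun x => erefl) (derivable_pt_lim_plus _ _ _ _ _ (H a) IH)).
Qed.

Lemma dpl_lin a b t0 : derivable_pt_lim (fun t => a + t * b) t0 b.
Proof.
move=> eps e0; exists (mkposreal _ e0) => h h0 _.
have -> : (a + (t0 + h) * b - (a + t0 * b)) / h - b = 0 by field.
by rewrite Rabs_R0.
Qed.

Lemma dpl_quad a b t0 :
  derivable_pt_lim (fun t => (a + t * b) * (a + t * b)) t0 (2 * b * (a + t0 * b)).
Proof.
apply: dpl_eq.
  exact: (dpl_ext (fun x => erefl) (derivable_pt_lim_mult _ _ _ _ _ (dpl_lin a b t0) (dpl_lin a b t0))).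
simpl; ring.
Qed.

Lemma max_second phi G L :
  (forall t, derivable_pt_lim phi t (G t)) -> derivable_pt_lim G 0 L ->
  (forall t, phi t <= phi 0) -> L <= 0.
Proof.
move=> HG HL Hmax; apply: Rnot_lt_le => L0.
have [del Hdel] := HL (L / 2) ltac:(lra).
have d0 := cond_pos del.
case: (Rle_lt_dec 0 (G 0)) => G0.
- have [c [Hc Hc']] := MVT_cor2 phi G 0 (del / 2) ltac:(lra) (fun c _ => HG c).
  have := Hdel c ltac:(lra) ltac:(rewrite Rabs_pos_eq; lra).
  rewrite Rplus_0_l => H.
  set q := (G c - G 0) / c in H.
  have Hq : G c - G 0 = q * c by rewrite /q; field; lra.
  have [H1 H2] := Rabs_def2 _ _ H.
  have Hqc : q * c > 0 by apply: Rmult_lt_0_compat; lra.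
  have Gc0 : G c * (del / 2 - 0) > 0 by apply: Rmult_lt_0_compat; lra.
  have := Hmax (del / 2); lra.
- have [c [Hc Hc']] := MVT_cor2 phi G (- (del / 2)) 0 ltac:(lra) (fun c _ => HG c).
  have := Hdel c ltac:(lra) ltac:(rewrite Rabs_left; lra).
  rewrite Rplus_0_l => H.
  set q := (G c - G 0) / c in H.
  have Hq : G c - G 0 = q * c by rewrite /q; field; lra.
  have [H1 H2] := Rabs_def2 _ _ H.
  have Hqc : q * (- c) > 0 by apply: Rmult_lt_0_compat; lra.
  have Gc0 : (- G c) * (0 - - (del / 2)) > 0 by apply: Rmult_lt_0_compat; lra.
  have := Hmax (- (del / 2)); lra.
Qed.


Lemma second_order m (u : vec m -> R) (Du : 'I_m -> vec m -> R)
  (D2u : 'I_m -> 'I_m -> vec m -> R)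
  (HDu : forall i x, has_partial u i x (Du i x))
  (HD2u : forall i j x, has_partial (Du i) j x (D2u i j x))
  (Hc1 : forall i, vcont (Du i)) (Hc2 : forall i j, vcont (D2u i j))
  (eps : R) (c : vec m)
  (Hmax : forall y, u y - eps * rsum (fun i => y i * y i) <=
                    u c - eps * rsum (fun i => c i * c i))
  (v : vec m) :
  rs (enum 'I_m) (fun i => v i * rs (enum 'I_m) (fun j => v j * D2u i j c))
   <= eps * rs (enum 'I_m) (fun i => 2 * v i * v i).
Proof.
pose line t : vec m := fun j => c j + t * v j.
have L0 : line 0 = c by apply: functional_extensionality => j; rewrite /line; ring.
pose phi t := u (line t) - eps * rs (enum 'I_m) (fun i => (c i + t * v i) * (c i + t * v i)).
pose G t := rs (enum 'I_m) (fun i => v i * Du i (line t))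
            - eps * rs (enum 'I_m) (fun i => 2 * v i * (c i + t * v i)).
have HG : forall t, derivable_pt_lim phi t (G t).
  move=> t; apply: (derivable_pt_lim_minus _ _ _ _ _ (chain _ u Du HDu Hc1 c v t)).
  apply: derivable_pt_lim_scal.
  exact: (rs_deriv (enum 'I_m) (fun i t => (c i + t * v i) * (c i + t * v i)) _ _
           (fun i => dpl_quad (c i) (v i) t)).
have HL : derivable_pt_lim G 0
   (rs (enum 'I_m) (fun i => v i * rs (enum 'I_m) (fun j => v j * D2u i j (line 0)))
    - eps * rs (enum 'I_m) (fun i => 2 * v i * v i)).
  apply: derivable_pt_lim_minus.
    apply: (rs_deriv (enum 'I_m) (fun i t => v i * Du i (line t))) => i.
    apply: (derivable_pt_lim_scal (fun t => Du i (line t))).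
    exact: (chain _ (Du i) (D2u i) (HD2u i) (Hc2 i) c v 0).
  apply: derivable_pt_lim_scal.
  apply: (rs_deriv (enum 'I_m) (fun i t => 2 * v i * (c i + t * v i))) => i.
  apply: (derivable_pt_lim_scal (fun t => c i + t * v i)).
  exact: dpl_lin.
have Hm : forall t, phi t <= phi 0.
  move=> t; rewrite /phi -/(line 0) L0.
  have E : rs (enum 'I_m) (fun i => (c i + 0 * v i) * (c i + 0 * v i))
          = rs (enum 'I_m) (fun i => c i * c i) by apply: rs_ext => i; ring.
  by rewrite E; have := Hmax (line t); rewrite !rsumE /line.
have := max_second _ _ _ HG HL Hm; rewrite L0; lra.
Qed.


Definition dl {m} (i j : 'I_m) : R := if i == j then 1 else 0.

Lemma gram m (p : vec m) (kap P : R) i j :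
  P = rs (enum 'I_m) (fun k => p k * p k) ->
  kap * (2 - kap * P) = / (1 + P) ->
  rs (enum 'I_m) (fun k => (dl k i - kap * p k * p i) * (dl k j - kap * p k * p j))
  = dl i j - p i * p j / (1 + P).
Proof.
move=> HP Hk.
have P0 : 0 <= P by rewrite HP; apply: rs_nonneg => k; nra.
rewrite (rs_ext _ _ (fun k => (dl k i * dl k j + (- kap * p j) * (dl k i * p k))
     + ((- kap * p i) * (dl k j * p k) + (kap * kap * p i * p j) * (p k * p k)))); last first.
  by move=> k; ring.
rewrite !rs_add !rs_scal.
rewrite /dl !rs_delta ?enum_uniq ?mem_enum // -HP.
have -> : p i * p j / (1 + P) = p i * p j * / (1 + P) by [].
rewrite -Hk; ring.
Qed.

Lemma kap_eq (P : R) : 0 <= P ->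
  let s := sqrt (1 + P) in let kap := / (s * (s + 1)) in kap * (2 - kap * P) = / (1 + P).
Proof.
move=> P0 s kap.
have s0 : 0 < s by apply: sqrt_lt_R0; lra.
have Hs : s * s = 1 + P by rewrite /s sqrt_sqrt; lra.
have -> : P = s * s - 1 by lra.
rewrite /kap; field; split; nra.
Qed.

Lemma final_ineq m (p : vec m) (M : 'I_m -> 'I_m -> R) eps : 0 <= eps ->
  (forall v : vec m, rs (enum 'I_m) (fun i => v i * rs (enum 'I_m) (fun j => v j * M i j))
      <= eps * rs (enum 'I_m) (fun i => 2 * v i * v i)) ->
  rs (enum 'I_m) (fun i => rs (enum 'I_m) (fun j =>
     (dl i j - p i * p j / (1 + rs (enum 'I_m) (fun k => p k * p k))) * M i j))
  <= 2 * eps * INR m.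
Proof.
move=> e0 H.
set E := enum 'I_m.
set P := rs E (fun k => p k * p k).
have P0 : 0 <= P by apply: rs_nonneg => k; nra.
set kap := / (sqrt (1 + P) * (sqrt (1 + P) + 1)).
have Hk : kap * (2 - kap * P) = / (1 + P) by exact: kap_eq.
pose b (k : 'I_m) : vec m := fun i => dl k i - kap * p k * p i.
have Hg : forall i j, rs E (fun k => b k i * b k j) = dl i j - p i * p j / (1 + P).
  by move=> i j; apply: gram.
have Hsum := rs_le E _ _ (fun k => H (b k)).
rewrite rs_scal in Hsum.
have L : rs E (fun k => rs E (fun i => b k i * rs E (fun j => b k j * M i j)))
       = rs E (fun i => rs E (fun j => (dl i j - p i * p j / (1 + P)) * M i j)).
  rewrite (rs_ext _ _ (fun k => rs E (fun i => rs E (fun j => b k i * b k j * M i j)))); last first.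
    move=> k; apply: rs_ext => i; rewrite -rs_scal; apply: rs_ext => j; ring.
  rewrite rs_swap; apply: rs_ext => i.
  rewrite rs_swap; apply: rs_ext => j.
  rewrite -Hg Rmult_comm -rs_scal; apply: rs_ext => k; ring.
have R1 : rs E (fun k => rs E (fun i => 2 * b k i * b k i)) <= 2 * INR m.
  rewrite rs_swap.
  rewrite (rs_ext _ _ (fun i => 2 * rs E (fun k => b k i * b k i))); last first.
    by move=> i; rewrite -rs_scal; apply: rs_ext => k; ring.
  rewrite rs_scal.
  have : rs E (fun i => rs E (fun k => b k i * b k i)) <= INR m.
    apply: (Rle_trans _ (rs E (fun _ => 1))); last by rewrite rs_const /E size_enum_ord; lra.
    apply: rs_le => i; rewrite Hg /dl eqxx.
    have : 0 <= p i * p i / (1 + P) by apply: Rmult_le_pos; [nra|apply: Rlt_le; apply: Rinv_0_lt_compat; lra].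
    lra.
  by move=> h; apply: Rmult_le_compat_l; [lra|exact: h].
rewrite -/P -L.
apply: Rle_trans Hsum _.
apply: (Rle_trans _ _ _ (Rmult_le_compat_l _ _ _ e0 R1)); lra.
Qed.


Lemma rs_sub {I : Type} (s : seq I) f g : rs s (fun i => f i - g i) = rs s f - rs s g.
Proof. elim: s => /= [|a s ->]; ring. Qed.

Lemma vcont_N m : vcont (fun y : vec m => rsum (fun i => y i * y i)).
Proof.
move=> x eps e0.
set E := enum 'I_m.
set A := rs E (fun j => Rabs (x j)).
have A0 : 0 <= A by apply: rs_nonneg => j; apply: Rabs_pos.
have m0 := pos_INR m.
set K := INR m + 2 * A + 1.
have K0 : 0 < K by rewrite /K; lra.
exists (Rmin 1 (eps / K)); split.
  by apply: Rmin_pos; [lra|apply: Rdiv_lt_0_compat].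
move=> y Hy.
set d := Rmin 1 (eps / K) in Hy.
have d1 : d <= 1 by apply: Rmin_l.
have d2 : d <= eps / K by apply: Rmin_r.
have Hyj : forall j, Rabs (y j - x j) < d.
  move=> j; apply: Rle_lt_trans (coord_le_vnorm _ (fun j => y j - x j) j) Hy.
rewrite !rsumE -rs_sub.
apply: Rle_lt_trans (rs_abs _ _) _.
apply: (Rle_lt_trans _ (rs E (fun j => d * (1 + 2 * Rabs (x j))))).
  apply: rs_le => j.
  have -> : y j * y j - x j * x j = (y j - x j) * ((y j - x j) + 2 * x j) by ring.
  rewrite Rabs_mult; have h1 := Hyj j; have h2 := Rabs_pos (y j - x j).
  have h3 := Rabs_triang (y j - x j) (2 * x j).
  rewrite (Rabs_mult 2 (x j)) (Rabs_pos_eq 2) in h3; last lra.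
  have h4 := Rabs_pos (x j).
  set a := Rabs (y j - x j) in h1 h2 h3 *.
  set X := Rabs (x j) in h3 h4 *.
  set B := Rabs (y j - x j + 2 * x j) in h3 *.
  have h5 : a * B <= a * (a + 2 * X) by apply: Rmult_le_compat_l.
  have h6 : a * a <= d by nra.
  have h7 : a * (2 * X) <= d * (2 * X) by apply: Rmult_le_compat_r; lra.
  nra.
rewrite rs_scal rs_add rs_const rs_scal size_enum_ord -/A Rmult_1_r.
have : d * K <= eps.
  have := Rmult_le_compat_r K _ _ (Rlt_le _ _ K0) d2.
  rewrite /Rdiv Rmult_assoc Rinv_l; lra.
have d0 : 0 < d by apply: Rmin_pos; [lra|apply: Rdiv_lt_0_compat].
rewrite /K; nra.
Qed.

Lemma vcont_comb m (f g : vec m -> R) a : vcont f -> vcont g ->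
  vcont (fun y => f y - a * g y).
Proof.
move=> Hf Hg x eps e0.
have [d1 [d10 H1]] := Hf x (eps / 2) ltac:(lra).
have [d2 [d20 H2]] := Hg x (eps / 2 / (Rabs a + 1)) ltac:(apply: Rdiv_lt_0_compat; have := Rabs_pos a; lra).
exists (Rmin d1 d2); split; first by apply: Rmin_pos.
move=> y Hy.
have := H1 y (Rlt_le_trans _ _ _ Hy (Rmin_l _ _)).
have := H2 y (Rlt_le_trans _ _ _ Hy (Rmin_r _ _)).
have -> : f y - a * g y - (f x - a * g x) = (f y - f x) + (- a) * (g y - g x) by ring.
move=> h2 h1.
apply: Rle_lt_trans (Rabs_triang _ _) _; rewrite Rabs_mult Rabs_Ropp.
have ha := Rabs_pos a.
have : Rabs a * Rabs (g y - g x) <= (Rabs a + 1) * (eps / 2 / (Rabs a + 1)).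
  apply: Rmult_le_compat; [lra|apply: Rabs_pos|lra|lra].
have -> : (Rabs a + 1) * (eps / 2 / (Rabs a + 1)) = eps / 2 by field; lra.
lra.
Qed.


Lemma far_bound m (u : vec m -> R) (C r alpha eps : R) :
  0 < C -> 0 < r ->
  (forall x : vec m, r <= vnorm x -> Rabs (u x) <= C * Rpower (vnorm x) alpha) ->
  alpha < 2 -> 0 < eps ->
  exists M, 0 <= M /\ forall y : vec m, M < vnorm y ->
     u y - eps * rsum (fun i => y i * y i) < u (fun _ => 0).
Proof.
move=> HC Hr Hg Ha e0.
set beta := Rmax alpha 1.
have b1 : 1 <= beta by apply: Rmax_r.
have ab : alpha <= beta by apply: Rmax_l.
have b2 : beta < 2 by apply: Rmax_lub_lt; lra.
set d0 := 2 - beta.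
have d00 : 0 < d0 by rewrite /d0; lra.
set u0 := u (fun _ => 0).
set K := (C + Rabs u0 + 1) / eps.
have K0 : 0 < K by apply: Rdiv_lt_0_compat; [have := Rabs_pos u0; lra|lra].
have eK : eps * K = C + Rabs u0 + 1 by rewrite /K; field; lra.
set rho0 := Rpower K (/ d0).
have rho00 : 0 < rho0 by rewrite /rho0 /Rpower; apply: exp_pos.
have rho0d : Rpower rho0 d0 = K.
  rewrite /rho0 Rpower_mult Rinv_l; last lra.
  by rewrite Rpower_1.
exists (Rmax (Rmax r rho0) 1); split.
  apply: Rle_trans (Rmax_r _ _); lra.
move=> y Hy.
set rho := vnorm y in Hy *.
have Hr1 : Rmax r rho0 <= rho by apply: Rlt_le; apply: Rle_lt_trans (Rmax_l _ _) Hy.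
have rho1 : 1 <= rho by apply: Rlt_le; apply: Rle_lt_trans (Rmax_r _ _) Hy.
have rhor : r <= rho by apply: Rle_trans (Rmax_l _ _) Hr1.
have rhorho0 : rho0 <= rho by apply: Rle_trans (Rmax_r _ _) Hr1.
have HS : rsum (fun i => y i * y i) = rho * rho.
  rewrite /rho /vnorm sqrt_sqrt //; rewrite rsumE; apply: rs_nonneg => i; nra.
have H1 := Hg y rhor; rewrite -/rho in H1.
have H2 : Rpower rho alpha <= Rpower rho beta by apply: Rle_Rpower.
set X := Rpower rho beta in H2 *.
have X1 : 1 <= X.
  rewrite -(Rpower_O rho); last lra.
  apply: Rle_Rpower; lra.
set Y := Rpower rho d0.
have YK : K <= Y.
  rewrite -rho0d; apply: Rle_Rpower_l; lra.
have XY : rho * rho = X * Y.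
  rewrite /X /Y -Rpower_plus.
  have -> : beta + d0 = INR 2 by rewrite /d0 /=; ring.
  by rewrite Rpower_pow /=; [ring|lra].
rewrite HS XY.
have eY : C + Rabs u0 + 1 <= eps * Y by rewrite -eK; apply: Rmult_le_compat_l; lra.
have h1 : X * (C + Rabs u0 + 1) <= X * (eps * Y) by apply: Rmult_le_compat_l; lra.
have h2 : C * Rpower rho alpha <= C * X by apply: Rmult_le_compat_l; lra.
have h3 := Rle_abs (u y).
have h4 : - Rabs u0 <= u0 by have := Rabs_pos u0; have := Rle_abs (- u0); rewrite Rabs_Ropp; lra.
have h5 : X * (Rabs u0 + 1) >= Rabs u0 + 1 by have := Rabs_pos u0; nra.
nra.
Qed.

Module EVTm.
Import all_order all_algebra all_classical all_reals all_analysis Rstruct Rstruct_topology.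
Import Order.TTheory GRing.Theory Num.Theory.
Import numFieldNormedType.Exports.
Section EVT.
Local Open Scope classical_set_scope.
Local Open Scope ring_scope.

Lemma absE (x : R) : Rabs x = `|x|. Proof. by []. Qed.

Lemma EVT_box (m : nat) (F : vec m -> R) (M : R) : (0 <= M)%coqR -> vcont F ->
  exists c : vec m, (forall i, Rabs (c i) <= M)%coqR /\
    forall y : vec m, (forall i, Rabs (y i) <= M)%coqR -> (F y <= F c)%coqR.
Proof.
move=> M0 Fc.
pose G (v : 'rV[R]_m) := F (fun i => v ord0 i).
pose A := [set v : 'rV[R]_m | forall i, `[(- M), M]%classic (v ord0 i)].
have cA : compact A.
  by apply: (@rV_compact _ _ (fun=> `[(- M), M]%classic)) => _; exact: segment_compact.
have A0 : A !=set0.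
  have M0' : 0 <= M by exact/RleP.
  by exists 0 => i /=; rewrite mxE in_itv /= oppr_le0 M0'.
have Gc : continuous G.
  move=> v; apply/(@pseudometric_normed_Zmodule.cvgrPdist_lt _ R^o _ (nbhs v) (nbhs_filter v)) => e e0.
  have e0' : (0 < e)%coqR by apply/RltP.
  have [d [d0 Hd]] := Fc (fun i => v ord0 i) e e0'.
  have [eta [eta0 Heta]] := @vnorm_small m d d0.
  apply/nbhs_ballP; exists eta; first exact/RltP.
  move=> y [_ Hy]; rewrite /G.
  have : (Rabs (F (fun i => y ord0 i) - F (fun i => v ord0 i)) < e)%coqR.
    apply: Hd; apply: Heta => j; have := Hy ord0 j; rewrite /ball /= => /RltP.
    by rewrite absE distrC.
  by rewrite absE distrC => /RltP.
have [c cA' Hc] := compact_EVT_max A0 cA (continuous_subspaceT Gc).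
exists (fun i => c ord0 i); split.
  move=> i; rewrite inE in cA'; have := cA' i; rewrite /= in_itv /= => /andP[h1 h2].
  apply/RleP; rewrite absE ler_norml h1 h2 //.
move=> y Hy.
have yA : (\row_i y i) \in A.
  rewrite inE => i /=; rewrite mxE in_itv /=; have := Hy i => /RleP; rewrite absE ler_norml //.
have := Hc _ yA; rewrite /G => /RleP.
have -> : (fun i => (\row_i0 y i0) ord0 i) = y by apply: funext => i; rewrite mxE.
done.
Qed.
End EVT.
End EVTm.
Open Scope R_scope.

Theorem mainTheorem7 (m : nat) (u : vec m -> R)
  (Du : 'I_m -> vec m -> R) (D2u : 'I_m -> 'I_m -> vec m -> R)
  (Hsmooth : smooth u)
  (HDu : forall i x, has_partial u i x (Du i x))
  (HD2u : forall i j x, has_partial (Du i) j x (D2u i j x))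
  (Htrans : forall x, translator_eq Du D2u x)
  (C r alpha : R) (HC : 0 < C) (Hr : 0 < r)
  (Hgrowth : forall x : vec m, r <= vnorm x -> Rabs (u x) <= C * Rpower (vnorm x) alpha) :
  2 <= alpha.
Proof.
have [m0|mpos] := eqVneq m 0%N.
  subst m; exfalso.
  have := Htrans (fun _ => 0); rewrite /translator_eq /rsum.
  have -> : enum 'I_0 = [::] by apply/size0nil; rewrite size_enum_ord.
  by move=> /= H; lra.
have m1 : 1 <= INR m by apply: (le_INR 1); apply/leP; rewrite lt0n.
apply: Rnot_lt_le => Ha.
have [Hu0 Hu1] := Hsmooth 2%N.
have Hc12 : forall i, vcont (Du i) /\ forall j, vcont (D2u i j).
  move=> i; have [g [Hg [Hgc Hg2]]] := Hu1 i.
  have Eg : g = Du i.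
    apply: functional_extensionality => x.
    exact: (uniqueness_limite _ _ _ _ (Hg x) (HDu i x)).
  subst g; split => // j.
  have [h [Hh Hhc]] := Hg2 j.
  have Eh : h = D2u i j.
    apply: functional_extensionality => x.
    exact: (uniqueness_limite _ _ _ _ (Hh x) (HD2u i j x)).
  by subst h.
have Hc1 : forall i, vcont (Du i) by move=> i; case: (Hc12 i).
have Hc2 : forall i j, vcont (D2u i j) by move=> i; case: (Hc12 i).
set eps := / (4 * INR m).
have e0 : 0 < eps by apply: Rinv_0_lt_compat; lra.
set w := fun y : vec m => u y - eps * rsum (fun i => y i * y i).
have wc : vcont w by apply: vcont_comb => //; apply: vcont_N.
have [M [M0 HM]] := far_bound m u C r alpha eps HC Hr Hgrowth Ha e0.
have [c [_ Hc]] := EVTm.EVT_box m w M M0 wc.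
have w0 : w (fun _ => 0) = u (fun _ => 0).
  rewrite /w rsumE (rs_ext _ _ (fun _ => 0)); last by move=> i; ring.
  rewrite rs_const; ring.
have Hglob : forall y, w y <= w c.
  move=> y; case: (classic (forall i, Rabs (y i) <= M)) => Hy; first exact: Hc.
  have [i Hi] := not_all_ex_not _ _ Hy.
  have Hyi : M < vnorm y.
    apply: Rlt_le_trans (coord_le_vnorm _ y i); lra.
  have := HM y Hyi; rewrite -w0 -/(w y) => h.
  have : w (fun _ => 0) <= w c.
    apply: Hc => j; rewrite Rabs_R0; lra.
  lra.
have Hso := second_order m u Du D2u HDu HD2u Hc1 Hc2 eps c Hglob.
have fin := final_ineq m (fun i => Du i c) (fun i j => D2u i j c) eps (Rlt_le _ _ e0) Hso.
have E1 := Htrans c.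
have H1 : 1 <= 2 * eps * INR m by rewrite -[X in X <= _]E1; exact: fin.
have : 2 * eps * INR m = / 2 by rewrite /eps; field; lra.
lra.
Qed.
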